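(* Let $G$ be a finite simple unmixed graph without isolated vertices and let $I_c(G)$ be its ideal of covers. If the graph $\mathcal{G}_{I_c(G)}$ is connected, then (a) $G$ has no duplicated vertices, and (b) every $4$-cycle of $G$ has an edge that does not satisfy the (P) property.
   Context: $G$ is unmixed if all minimal vertex covers (inclusion-minimal vertex sets meeting every edge) have equal size. $I_c(G)$ is generated by $\prod_{t\in C}t$ over minimal vertex covers $C$. With minimal vertex covers $C_1,\dots,C_r$, $\mathcal{G}_{I_c(G)}$ has vertex set $\{C_1,\ldots,C_r\}$ and $\{C_i,C_j\}$ ($i\ne j$) is an edge iff $|C_i\cup C_j|=|C_i|+1$. Two distinct vertices $t,t'$ are duplicated if $N_G(t)=N_G(t')$. An edge $e=\{t_1,t_2\}$ has the (P) property if for all edges $\{t_1,t_1'\}$ and $\{t_2,t_2'\}$ distinct from $e$, $\{t_1',t_2'\}$ is an edge of $G$. *)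

(* Defs.v *)
From mathcomp Require Import all_boot.
Set Implicit Arguments. Unset Strict Implicit. Unset Printing Implicit Defensive.

Definition simple_graph (T : finType) (e : rel T) : Prop :=
  symmetric e /\ irreflexive e.

Definition no_isolated_vertices (T : finType) (e : rel T) : Prop :=
  forall x : T, exists y : T, e x y.

Definition vertex_cover (T : finType) (e : rel T) (C : {set T}) : bool :=
  [forall x, forall y, e x y ==> (x \in C) || (y \in C)].

Definition min_vertex_cover (T : finType) (e : rel T) (C : {set T}) : bool :=
  minset (vertex_cover e) C.

Definition unmixed (T : finType) (e : rel T) : Prop :=
  forall C D : {set T}, min_vertex_cover e C -> min_vertex_cover e D -> #|C| = #|D|.

(* Edge relation of the graph G_{I_c(G)}: vertices are the minimal vertex
   covers (the generators prod_{t in C} t of I_c(G)), C ~ D iff C <> D and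
   |C u D| = |C| + 1. *)
Definition cover_graph_rel (T : finType) (e : rel T) : rel {set T} :=
  fun C D => [&& min_vertex_cover e C, min_vertex_cover e D, C != D &
                 #|C :|: D| == #|C|.+1].

Definition cover_graph_connected (T : finType) (e : rel T) : Prop :=
  forall C D : {set T}, min_vertex_cover e C -> min_vertex_cover e D ->
    connect (cover_graph_rel e) C D.

Definition nbhd (T : finType) (e : rel T) (t : T) : {set T} := [set u | e t u].

Definition duplicated (T : finType) (e : rel T) (t t' : T) : Prop :=
  t <> t' /\ nbhd e t = nbhd e t'.

Definition P_property (T : finType) (e : rel T) (t1 t2 : T) : Prop :=
  forall t1' t2' : T, e t1 t1' -> e t2 t2' -> t1' <> t2 -> t2' <> t1 -> e t1' t2'.

Definition four_cycle (T : finType) (e : rel T) (a b c d : T) : Prop :=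
  uniq [:: a; b; c; d] /\ e a b /\ e b c /\ e c d /\ e d a.

(* Main.v *)
Require Import Defs.
From mathcomp Require Import all_boot.
From mathcomp Require Import zify.
From Stdlib Require Import Classical.
Set Implicit Arguments. Unset Strict Implicit.

Section Aux.
Variables (T : finType) (e : rel T).
Hypothesis (Hs : simple_graph e).

Lemma cover_edge C x y : vertex_cover e C -> e x y -> (x \in C) || (y \in C).
Proof. by move=> /forallP /(_ x) /forallP /(_ y) /implyP; apply. Qed.

Lemma min_cover C : min_vertex_cover e C -> vertex_cover e C.
Proof. by case/minsetP. Qed.

Lemma min_nbr C x : min_vertex_cover e C -> x \in C -> exists x', e x x' /\ x' \notin C.
Proof.
move=> /minsetP [HC Hmin] xC.
case: (boolP [exists x', e x x' && (x' \notin C)]).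
  by case/existsP => x' /andP [] ? ?; exists x'.
rewrite negb_exists => /forallP Hn.
have Hcov : vertex_cover e (C :\ x).
  apply/forallP => u; apply/forallP => v; apply/implyP => euv.
  rewrite !in_setD1.
  have := cover_edge HC euv.
  case: Hs => Hsym Hirr.
  move: euv; case: (eqVneq u x) => [?|ux]; case: (eqVneq v x) => [?|vx]; subst => //=.
  - by rewrite Hirr.
  - move=> euv _; have := Hn v; rewrite euv /=; by case: (v \in C).
  - move=> euv _; have := Hn u; rewrite Hsym in euv; rewrite euv /=. by case: (u \in C).
have := Hmin _ Hcov (subD1set C x) => Heq.
by move: xC; rewrite -Heq setD11.
Qed.

Lemma exists_min_with x y : e x y -> exists C, min_vertex_cover e C /\ x \in C.
Proof.
move=> exy.
have Hc : vertex_cover e (~: [set y]).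
  apply/forallP => u; apply/forallP => v; apply/implyP => euv.
  rewrite !in_setC !in_set1.
  case: (eqVneq u y) => [E|] //=.
  apply/eqP => vy; case: Hs => _ Hirr; subst; by rewrite Hirr in euv.
case: (minset_exists Hc) => A HA sub.
exists A; split => //.
have := cover_edge (min_cover HA) exy.
case/orP => // yA.
by have := subsetP sub y yA; rewrite in_setC in_set1 eqxx.
Qed.

Lemma exists_min_without x : exists C, min_vertex_cover e C /\ x \notin C.
Proof.
have Hc : vertex_cover e (~: [set x]).
  apply/forallP => u; apply/forallP => v; apply/implyP => euv.
  rewrite !in_setC !in_set1.
  case: (eqVneq u x) => [E|] //=.
  apply/eqP => vy; case: Hs => _ Hirr; subst; by rewrite Hirr in euv.
case: (minset_exists Hc) => A HA sub.
exists A; split => //.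
apply/negP => xA.
by have := subsetP sub x xA; rewrite in_setC in_set1 eqxx.
Qed.

Lemma step_two x y u v : unmixed e -> cover_graph_rel e x y -> u != v ->
  u \in x -> v \in x -> u \notin y -> v \notin y -> False.
Proof.
move=> Hun /and4P [Mx My _ /eqP Hxy] uv ux vx uy vy.
have Hc := Hun _ _ Mx My.
have H1 := cardsUI x y.
have H2 := cardsID y x.
have Hsub : [set u; v] \subset x :\: y.
  apply/subsetP => w; rewrite !inE => /orP [] /eqP ->; rewrite ?ux ?vx ?uy ?vy //.
have := subset_leq_card Hsub; rewrite cards2 uv.
lia.
Qed.

Lemma connect_pres (Q : pred {set T}) C D :
  (forall x y, cover_graph_rel e x y -> Q x -> Q y) ->
  connect (cover_graph_rel e) C D -> Q C -> Q D.
Proof.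
move=> Hst /connectP [p Hp ->] {D}.
elim: p C Hp => [|z p IH] C //= /andP [Cz Hp] QC.
apply: IH Hp _; exact: Hst Cz QC.
Qed.

End Aux.

Theorem theorem5p4 (T : finType) (e : rel T) :
  simple_graph e -> no_isolated_vertices e -> unmixed e ->
  cover_graph_connected e ->
  (forall t t' : T, ~ duplicated e t t') /\
  (forall a b c d : T, four_cycle e a b c d ->
     ~ P_property e a b \/ ~ P_property e b c \/
     ~ P_property e c d \/ ~ P_property e d a).
Proof.
move=> Hs Hni Hun Hconn.
have Hsym : symmetric e by case: Hs.
have Hirr : irreflexive e by case: Hs.
split.
  move=> t t' [tt' Hn].
  have Heq : forall s s', nbhd e s = nbhd e s' -> s <> s' ->
      forall C, min_vertex_cover e C -> s' \in C -> s \in C.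
    move=> s s' Hn' ss' C MC s'C.
    apply/negPn/negP => sC.
    have [z [ez zC]] := min_nbr Hs MC s'C.
    have : z \in nbhd e s by rewrite Hn' inE.
    rewrite inE => esz.
    have := cover_edge (min_cover MC) esz.
    by rewrite (negbTE sC) (negbTE zC).
  have Hequiv : forall C, min_vertex_cover e C -> (t \in C) = (t' \in C).
    move=> C MC; apply/idP/idP.
      move=> tC; apply: (Heq t' t (esym Hn) _ C MC tC) => E; exact: tt' (esym E).
    by apply: (Heq t t').
  have [u etu] := Hni t.
  have [C1 [M1 tC1]] := exists_min_with Hs etu.
  have [D1 [M2 tD1]] := exists_min_without Hs t.
  suff : t \in D1 by rewrite (negbTE tD1).
  apply: (@connect_pres T e (fun C => t \in C) C1 D1 _ (Hconn _ _ M1 M2) tC1) => x y rxy tx.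
  case/and4P: (rxy) => Mx My _ _.
  apply/negPn/negP => ty.
  apply: (step_two Hun rxy (u := t) (v := t')) => //.
  - by apply/eqP.
  - by rewrite -Hequiv.
  - by rewrite -Hequiv.
move=> a b c d [Hu [eab [ebc [ecd eda]]]].
case: (classic (P_property e a b)) => Pab; last by left.
case: (classic (P_property e b c)) => Pbc; last by right; left.
case: (classic (P_property e c d)) => Pcd; last by right; right; left.
case: (classic (P_property e d a)) => Pda; last by right; right; right.
exfalso.
have Hnot : forall x y, e x y -> P_property e x y -> forall C, min_vertex_cover e C ->
    x \in C -> y \in C -> False.
  move=> x y exy Pxy C MC xC yC.
  have [x' [exx' x'C]] := min_nbr Hs MC xC.
  have [y' [eyy' y'C]] := min_nbr Hs MC yC.
  have Hx' : x' <> y by move=> E; rewrite E yC in x'C.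
  have Hy' : y' <> x by move=> E; rewrite E xC in y'C.
  have := cover_edge (min_cover MC) (Pxy _ _ exx' eyy' Hx' Hy').
  by rewrite (negbTE x'C) (negbTE y'C).
have Hac : forall C, min_vertex_cover e C -> a \in C -> c \in C.
  move=> C MC aC.
  have := cover_edge (min_cover MC) ebc.
  case/orP => // bC; exfalso; exact: (Hnot a b eab Pab C MC aC bC).
have [C1 [M1 aC1]] := exists_min_with Hs eab.
have [D1 [M2 aD1]] := exists_min_without Hs a.
suff : a \in D1 by rewrite (negbTE aD1).
apply: (@connect_pres T e (fun C => a \in C) C1 D1 _ (Hconn _ _ M1 M2) aC1) => x y rxy ax.
case/and4P: (rxy) => Mx My _ _.
apply/negPn/negP => ay.
have by_ : b \in y.
  by have := cover_edge (min_cover My) eab; rewrite (negbTE ay).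
have cy : c \notin y.
  apply/negP => cy; exact: (Hnot b c ebc Pbc y My by_ cy).
apply: (step_two Hun rxy (u := a) (v := c)) => //.
- by move: Hu; rewrite /= !inE; case: (eqVneq a c) => //= E; subst; rewrite orbT.
- exact: Hac ax.
Qed.
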